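(* Let $s>0$ and $k\ge1$. (Interior face.) Let $\gamma\in\mathcal F_h^I$ with adjacent elements $\tau^\pm=\tau^\pm(\gamma)$. Let $\theta_\gamma\ge0$ be such that for all $v\in V_h^{DG}$ $$\bigl|2(\{K\nabla v\}_\omega\cdot\nu_\gamma,[\![v]\!])_{0,\gamma}\bigr|\le\tfrac1s\bigl(a_{\tau^-}(v,v)+a_{\tau^+}(v,v)\bigr)+\theta_\gamma\|[\![v]\!]\|_{0,\gamma}^2,$$ and let $\sigma_\gamma>\theta_\gamma$. Then for all $v_1,\dots,v_k\in V_h^{DG}$, $$a^I_\gamma\Bigl(\sum_{i=1}^kv_i,\sum_{i=1}^kv_i\Bigr)\le k\frac{\sigma_\gamma+\theta_\gamma}{\sigma_\gamma-\theta_\gamma}\sum_{i=1}^ka^I_\gamma(v_i,v_i)+\frac ks\frac{2\sigma_\gamma}{\sigma_\gamma-\theta_\gamma}\sum_{i=1}^k\bigl(a_{\tau^-}(v_i,v_i)+a_{\tau^+}(v_i,v_i)\bigr).$$ (Dirichlet boundary face.) Let $\gamma\in\mathcal F_h^D$ with adjacent element $\tau^-$. Let $\theta_\gamma\ge0$ be such that for all $v\in V_h^{DG}$ $$\bigl|2((K\nabla v)\cdot\nu_\gamma,v)_{0,\gamma}\bigr|\le\tfrac1s a_{\tau^-}(v,v)+\theta_\gamma\|v\|_{0,\gamma}^2,$$ and let $\sigma_\gamma>\theta_\gamma$. Then for all $v_1,\dots,v_k\in V_h^{DG}$, $$a^D_\gamma\Bigl(\sum_iv_i,\sum_iv_i\Bigr)\le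 k\frac{\sigma_\gamma+\theta_\gamma}{\sigma_\gamma-\theta_\gamma}\sum_{i=1}^ka^D_\gamma(v_i,v_i)+\frac ks\frac{2\sigma_\gamma}{\sigma_\gamma-\theta_\gamma}\sum_{i=1}^ka_{\tau^-}(v_i,v_i).$$
   Context: Let $\Omega\subset\mathbb R^d$ be a bounded polyhedral domain with a shape-regular mesh $\mathcal T_h$ of open elements $\tau=\mu_\tau(\hat\tau)$, where $\hat\tau$ is the reference simplex or cube. Let $K$ be symmetric positive definite, bounded, and constant on each element. Let $\Gamma_D\subseteq\partial\Omega$. The DG space is $$V_h^{DG}=\{v\in L^2(\Omega): v|_\tau=p_\tau\circ\mu_\tau^{-1},\ p_\tau\in\mathbb P_k\},$$ where $\mathbb P_k$ is the space of polynomials of total degree $\le k$ on simplices, or of maximum degree $\le k$ on cubes. Faces: - An interior face $\gamma\in\mathcal F_h^I$ is a $(d-1)$-dimensional intersection $\overline{\tau^-(\gamma)}\cap\overline{\tau^+(\gamma)}$ of two elements, with unit normal $\nu_\gamma$ pointing from $\tau^-$ to $\tau^+$. - $\mathcal F_h^D$ denotes the $(d-1)$-dimensional intersections of one element $\tau^-(\gamma)$ with $\Gamma_D$; for these $\nu_\gamma$ is the outer unit normal of $\partial\Omega$. For $v\in V_h^{DG}$ let $v^\pm$ be the traces from $\tau^\pm$. Define the jump $[\![v]\!]=v^--v^+$ and the weighted average $\{w\}_\omega=\omega^-w^-+\omega^+w^+$ with weights $\omega^\pm\ge0$, $\omega^-+\omega^+=1$. Let $(v,w)_{0,\gamma}=\int_\gamma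 vw\,ds$ and $\|v\|_{0,\gamma}^2=(v,v)_{0,\gamma}$. Bilinear forms, with penalty parameters $\sigma_\gamma>0$: - $a_\tau(u,v)=\int_\tau(K\nabla u)\cdot\nabla v\,dx$; - $a^I_\gamma(u,v)=\sigma_\gamma([\![u]\!],[\![v]\!])_{0,\gamma}-(\{K\nabla u\}_\omega\cdot\nu_\gamma,[\![v]\!])_{0,\gamma}-(\{K\nabla v\}_\omega\cdot\nu_\gamma,[\![u]\!])_{0,\gamma}$; - $a^D_\gamma(u,v)=\sigma_\gamma(u,v)_{0,\gamma}-((K\nabla u)\cdot\nu_\gamma,v)_{0,\gamma}-((K\nabla v)\cdot\nu_\gamma,u)_{0,\gamma}$. *)

(* Defs.v *)
From HB Require Import structures.
From mathcomp Require Import all_boot all_order all_algebra.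
From mathcomp Require Import reals.
Set Implicit Arguments. Unset Strict Implicit. Unset Printing Implicit Defensive.
Import Order.TTheory GRing.Theory Num.Theory.
Local Open Scope ring_scope.

Section DGForms.
Variable R : realType.

Definition sym_bilinear (W : lmodType R) (b : W -> W -> R) : Prop :=
  (forall (a : R) (u v w : W), b (a *: u + v) w = a * b u w + b v w) /\
  (forall u v : W, b u v = b v u).

(* an element energy form  a_tau(u,v) = int_tau (K grad u).grad v  with K SPD:
   symmetric, bilinear, positive semidefinite on V_h^DG *)
Definition energy_form (V : lmodType R) (a : V -> V -> R) : Prop :=
  sym_bilinear a /\ (forall v, 0 <= a v v).

Variables (V F : lmodType R).
(* V = V_h^DG ; F = functions on the face gamma, with L2(gamma) inner
   product ip = (.,.)_{0,gamma} *)

Definition jump (trm trp : V -> F) (v : V) : F := trm v - trp v.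

Definition wavg (om_m om_p : R) (gm gp : V -> F) (v : V) : F :=
  om_m *: gm v + om_p *: gp v.

(* a^I_gamma ; flm/flp v = (K grad v)^{-/+} . nu_gamma restricted to gamma *)
Definition aI (ip : F -> F -> R) (sigma om_m om_p : R)
    (trm trp flm flp : V -> F) (u v : V) : R :=
  sigma * ip (jump trm trp u) (jump trm trp v)
  - ip (wavg om_m om_p flm flp u) (jump trm trp v)
  - ip (wavg om_m om_p flm flp v) (jump trm trp u).

(* a^D_gamma ; tr v = trace of v from tau^- on gamma, fl v = (K grad v).nu *)
Definition aD (ip : F -> F -> R) (sigma : R) (tr fl : V -> F) (u v : V) : R :=
  sigma * ip (tr u) (tr v) - ip (fl u) (tr v) - ip (fl v) (tr u).

End DGForms.

(* Main.v *)
Require Import Defs.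
From HB Require Import structures.
From mathcomp Require Import all_boot all_order all_algebra.
From mathcomp Require Import reals.
From mathcomp Require Import ring lra.
Import Order.TTheory GRing.Theory Num.Theory.
Local Open Scope ring_scope.

Section Aux.
Variable R : realType.

Lemma arith (kk s sg th aS QS ES SQ SA SE : R) :
  0 <= kk -> 0 < s -> 0 <= th -> th < sg ->
  aS <= (sg + th) * QS + s^-1 * ES ->
  QS <= kk * SQ -> ES <= kk * SE ->
  (sg - th) * SQ <= SA + s^-1 * SE ->
  aS <= kk * ((sg + th) / (sg - th)) * SA + kk / s * (2 * sg / (sg - th)) * SE.
Proof.
move=> hk hs hth hsg h1 h2 h3 h4.
set d := sg - th; set di := d^-1; set u := s^-1.
have hd : 0 < d by rewrite /d subr_gt0.
have hdi : d * di = 1 by rewrite /di mulfV // gt_eqF.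
have hdi0 : 0 < di by rewrite /di invr_gt0.
have hu : 0 < u by rewrite /u invr_gt0.
have h5 : SQ <= di * (SA + u * SE).
  have : di * (d * SQ) <= di * (SA + u * SE) by rewrite ler_pM2l.
  by rewrite mulrA [di * d]mulrC hdi mul1r.
have hst : 0 <= sg + th by lra.
have h6 : (sg + th) * QS <= (sg + th) * kk * (di * (SA + u * SE)).
  rewrite -mulrA ler_wpM2l //.
  apply: (le_trans h2); by rewrite ler_wpM2l.
have h7 : u * ES <= u * (kk * SE) by rewrite ler_wpM2l // ltW.
have -> : kk * ((sg + th) / d) * SA + kk / s * (2 * sg / d) * SE
   = (sg + th) * kk * (di * (SA + u * SE)) + u * (kk * SE).
  have n1 : sg - th != 0 by rewrite subr_eq0 gt_eqF.
  have n2 : s != 0 by rewrite gt_eqF.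
  by rewrite /u /di /d; field; rewrite n1 n2.
rewrite /u in h6 h7 *; lra.
Qed.

Lemma bil0 {W : lmodType R} {b : W -> W -> R} : sym_bilinear b ->
  forall w, b 0 w = 0.
Proof.
move=> [hl _] w; have := hl 1 0 0 w; rewrite scale1r addr0 mul1r.
move=> h; have : b 0 w + b 0 w - b 0 w = b 0 w - b 0 w by rewrite -h.
by rewrite addrK subrr.
Qed.

Lemma bilD {W : lmodType R} {b : W -> W -> R} : sym_bilinear b ->
  forall u v w, b (u + v) w = b u w + b v w.
Proof. by move=> [hl _] u v w; have := hl 1 u v w; rewrite scale1r mul1r. Qed.

Lemma bilN {W : lmodType R} {b : W -> W -> R} : sym_bilinear b ->
  forall u w, b (- u) w = - b u w.
Proof.
move=> hb u w; have := (proj1 hb) (-1) u 0 w.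
by rewrite addr0 scaleN1r (bil0 hb) addr0 mulN1r.
Qed.

Lemma bilsum {W : lmodType R} {b : W -> W -> R} : sym_bilinear b ->
  forall (k : nat) (vs : 'I_k -> W) w, b (\sum_(i < k) vs i) w = \sum_(i < k) b (vs i) w.
Proof.
move=> hb k vs w; elim/big_rec2: _ => [|i x y _ <-]; first exact: bil0.
exact: bilD.
Qed.

Lemma sumsq {W : lmodType R} {b : W -> W -> R} : sym_bilinear b ->
  (forall v, 0 <= b v v) ->
  forall (k : nat) (vs : 'I_k -> W),
  b (\sum_(i < k) vs i) (\sum_(i < k) vs i) <= k%:R * \sum_(i < k) b (vs i) (vs i).
Proof.
move=> hb hp k vs.
have hs : forall u v, b u v = b v u by case: hb.
have key : forall i j, 2 * b (vs i) (vs j) <= b (vs i) (vs i) + b (vs j) (vs j).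
  move=> i j; have := hp (vs i - vs j).
  rewrite (bilD hb) (bilN hb) [b (vs i) _]hs [b (vs j) _]hs !(bilD hb) !(bilN hb).
  rewrite [b (vs j) (vs i)]hs; lra.
rewrite (bilsum hb).
under eq_bigr => i _ do rewrite hs (bilsum hb).
apply: (@le_trans _ _ (\sum_(i < k) \sum_(j < k)
          ((b (vs i) (vs i) + b (vs j) (vs j)) / 2))).
  apply: ler_sum => i _; apply: ler_sum => j _.
  have := key j i; rewrite ler_pdivlMr //; lra.
set S := \sum_(i < k) b (vs i) (vs i).
have -> : \sum_(i < k) \sum_(j < k) ((b (vs i) (vs i) + b (vs j) (vs j)) / 2)
   = \sum_(i < k) ((b (vs i) (vs i) / 2) *+ k) + (\sum_(j < k) (b (vs j) (vs j) / 2)) *+ k.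
  have -> : (\sum_(j < k) (b (vs j) (vs j) / 2)) *+ k
      = \sum_(i < k) \sum_(j < k) (b (vs j) (vs j) / 2) by rewrite sumr_const card_ord.
  rewrite -big_split /=; apply: eq_bigr => i _.
  rewrite (eq_bigr _ (fun j _ => mulrDl _ _ _)) big_split /= sumr_const card_ord //.
rewrite !sumrMnl -!mulr_suml -/S -mulrnDl -splitr mulr_natl.
by [].
Qed.

Lemma core (W : lmodType R) (k : nat) (s sg th : R) (Q E a c : W -> R)
  (vs : 'I_k -> W) :
  0 < s -> 0 <= th -> th < sg ->
  (forall v, a v = sg * Q v - c v) ->
  (forall v, `|c v| <= s^-1 * E v + th * Q v) ->
  Q (\sum_(i < k) vs i) <= k%:R * \sum_(i < k) Q (vs i) ->
  E (\sum_(i < k) vs i) <= k%:R * \sum_(i < k) E (vs i) ->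
  a (\sum_(i < k) vs i) <= k%:R * ((sg + th) / (sg - th)) * (\sum_(i < k) a (vs i))
     + k%:R / s * (2 * sg / (sg - th)) * (\sum_(i < k) E (vs i)).
Proof.
move=> hs hth hsg ha hc hQ hE.
apply: arith hQ hE _ => //.
  have := hc (\sum_(i < k) vs i); rewrite ler_norml ha => /andP[h1 h2]; lra.
rewrite mulr_sumr mulr_sumr -big_split /=; apply: ler_sum => i _.
have := hc (vs i); rewrite ler_norml ha => /andP[h1 h2]; lra.
Qed.

End Aux.

Theorem lemma3p20 (R : realType) (V F : lmodType R) (s : R) (k : nat) :
  0 < s -> (0 < k)%N ->
  (* interior face *)
  (forall (ip : F -> F -> R) (atm atp : V -> V -> R)
          (trm trp flm flp : {linear V -> F}) (om_m om_p theta sigma : R),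
     sym_bilinear ip -> (forall f, 0 <= ip f f) ->
     energy_form atm -> energy_form atp ->
     0 <= om_m -> 0 <= om_p -> om_m + om_p = 1 ->
     0 <= theta ->
     (forall v : V,
        `|2 * ip (wavg om_m om_p flm flp v) (jump trm trp v)|
          <= s^-1 * (atm v v + atp v v)
             + theta * ip (jump trm trp v) (jump trm trp v)) ->
     theta < sigma ->
     forall vs : 'I_k -> V,
       aI ip sigma om_m om_p trm trp flm flp (\sum_(i < k) vs i) (\sum_(i < k) vs i)
       <= k%:R * ((sigma + theta) / (sigma - theta))
            * (\sum_(i < k) aI ip sigma om_m om_p trm trp flm flp (vs i) (vs i))
          + k%:R / s * (2 * sigma / (sigma - theta))
            * (\sum_(i < k) (atm (vs i) (vs i) + atp (vs i) (vs i))))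
  /\
  (* Dirichlet boundary face *)
  (forall (ip : F -> F -> R) (atm : V -> V -> R)
          (tr fl : {linear V -> F}) (theta sigma : R),
     sym_bilinear ip -> (forall f, 0 <= ip f f) ->
     energy_form atm ->
     0 <= theta ->
     (forall v : V,
        `|2 * ip (fl v) (tr v)| <= s^-1 * atm v v + theta * ip (tr v) (tr v)) ->
     theta < sigma ->
     forall vs : 'I_k -> V,
       aD ip sigma tr fl (\sum_(i < k) vs i) (\sum_(i < k) vs i)
       <= k%:R * ((sigma + theta) / (sigma - theta))
            * (\sum_(i < k) aD ip sigma tr fl (vs i) (vs i))
          + k%:R / s * (2 * sigma / (sigma - theta))
            * (\sum_(i < k) atm (vs i) (vs i))).
Proof.
move=> hs hk; split.
- move=> ip atm atp trm trp flm flp om_m om_p theta sigma hip hipp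
    [hm hmp] [hp hpp] _ _ _ hth hc hsg vs.
  have hJ : sym_bilinear (fun u v : V => ip (jump trm trp u) (jump trm trp v)).
    split; last by move=> u v; case: hip => _ ->.
    move=> a u v w /=.
    have -> : jump trm trp (a *: u + v) = a *: jump trm trp u + jump trm trp v.
      by rewrite /jump (linearP trm) (linearP trp) scalerBr opprD addrACA.
    by case: hip => -> _.
  apply: (@core R V k s sigma theta (fun v => ip (jump trm trp v) (jump trm trp v))
     (fun v => atm v v + atp v v)
     (fun v => aI ip sigma om_m om_p trm trp flm flp v v)
     (fun v => 2 * ip (wavg om_m om_p flm flp v) (jump trm trp v))) => //.
  + by move=> v; rewrite /aI; ring.
  + have hp0 : forall v, 0 <= ip (jump trm trp v) (jump trm trp v) by move=> v; exact: hipp.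
    have H := sumsq _ hJ hp0 _ vs. exact H.
  + have := sumsq _ hm hmp _ vs; have := sumsq _ hp hpp _ vs.
    rewrite big_split /= mulrDr; lra.
- move=> ip atm tr fl theta sigma hip hipp [hm hmp] hth hc hsg vs.
  have hJ : sym_bilinear (fun u v : V => ip (tr u) (tr v)).
    split; last by move=> u v; case: hip => _ ->.
    by move=> a u v w /=; rewrite linearP; case: hip => -> _.
  apply: (@core R V k s sigma theta (fun v => ip (tr v) (tr v)) (fun v => atm v v)
     (fun v => aD ip sigma tr fl v v)
     (fun v => 2 * ip (fl v) (tr v))) => //.
  + by move=> v; rewrite /aD; ring.
  + exact: (sumsq _ hJ (fun v => hipp _) _ vs).
  + exact: (sumsq _ hm hmp _ vs).
Qed.
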